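(* Let $A_1=\begin{pmatrix}1&1&2\\1&0&1\\2&1&0\end{pmatrix}$, $a=\begin{pmatrix}2\\2\\1\end{pmatrix}$, let $k\ge1$, let $v\in\mathbb R^k$ be entrywise nonnegative with $v^Tv=1$, and define $$A(v)=\begin{pmatrix}A_1&av^T\\ va^T& vv^T\end{pmatrix}\in\mathbb R^{(k+3)\times(k+3)}.$$ Then $\operatorname{rk}(A(v))=\operatorname{rk}_+(A(v))=3$ and $\operatorname{st}_+(A(v))=4$.
   Context: The SNT-rank $\operatorname{st}_+(A)$ of a symmetric entrywise nonnegative $n\times n$ matrix $A$ is the minimal $k$ such that $A=BCB^T$ with $B$ an entrywise nonnegative $n\times k$ matrix and $C$ a symmetric entrywise nonnegative $k\times k$ matrix. $\operatorname{rk}_+(A)$ is the minimal $k$ such that $A=UV^T$ with $U,V$ entrywise nonnegative $n\times k$ matrices. *)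

(* Defs.v *)
From HB Require Import structures.
From mathcomp Require Import all_boot all_order all_algebra.
From mathcomp Require Import reals.
Set Implicit Arguments. Unset Strict Implicit. Unset Printing Implicit Defensive.
Import Order.TTheory GRing.Theory Num.Theory.
Local Open Scope ring_scope.

Definition nonneg_mx (R : realType) m n (M : 'M[R]_(m, n)) : Prop :=
  forall i j, 0 <= M i j.

Definition nn_fact (R : realType) n (A : 'M[R]_n) (k : nat) : Prop :=
  exists (U V : 'M[R]_(n, k)), [/\ nonneg_mx U, nonneg_mx V & A = U *m V^T].

Definition snt_fact (R : realType) n (A : 'M[R]_n) (k : nat) : Prop :=
  exists (B : 'M[R]_(n, k)) (C : 'M[R]_k),
    [/\ nonneg_mx B, nonneg_mx C, C^T = C & A = B *m C *m B^T].

Definition rk_plus_is (R : realType) n (A : 'M[R]_n) (r : nat) : Prop :=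
  nn_fact A r /\ forall k, nn_fact A k -> (r <= k)%N.

Definition st_plus_is (R : realType) n (A : 'M[R]_n) (r : nat) : Prop :=
  snt_fact A r /\ forall k, snt_fact A k -> (r <= k)%N.

Definition A1 (R : realType) : 'M[R]_3 :=
  \matrix_(i < 3, j < 3)
    (nth [::] [:: [:: 1; 1; 2]; [:: 1; 0; 1]; [:: 2; 1; 0]] i)`_j.

Definition avec (R : realType) : 'cV[R]_3 := \col_(i < 3) [:: 2; 2; 1]`_i.

Definition Av (R : realType) k (v : 'cV[R]_k) : 'M[R]_(3 + k) :=
  block_mx (A1 R) (avec R *m v^T) (v *m (avec R)^T) (v *m v^T).

(* Main.v *)
Require Import Defs.
From HB Require Import structures.
From mathcomp Require Import all_boot all_order all_algebra.
From mathcomp Require Import reals.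
From mathcomp Require Import ring lra.
Import Order.TTheory GRing.Theory Num.Theory.
Local Open Scope ring_scope.
Set Implicit Arguments. Unset Strict Implicit. Unset Printing Implicit Defensive.

Definition bf (R : realFieldType) (c11 c12 c13 c22 c23 c33 u1 u2 u3 v1 v2 v3 : R) :=
  u1 * v1 * c11 + u1 * v2 * c12 + u1 * v3 * c13 + u2 * v1 * c12 + u2 * v2 * c22 + u2 * v3 * c23 + u3 * v1 * c13 + u3 * v2 * c23 + u3 * v3 * c33.

Definition Sys (R : realFieldType) (c11 c12 c13 c22 c23 c33 x1 x2 x3 y1 y2 y3 z1 z2 z3 w1 w2 w3 T : R) : Prop :=
  [/\ 0 <= c11 /\ 0 <= c12 /\ 0 <= c13 /\ 0 <= c22 /\ 0 <= c23 /\ 0 <= c33 /\ 0 <= x1 /\ 0 <= x2 /\ 0 <= x3 /\ 0 <= y1 /\ 0 <= y2 /\ 0 <= y3 /\ 0 <= z1 /\ 0 <= z2 /\ 0 <= z3 /\ 0 <= w1 /\ 0 <= w2 /\ 0 <= w3 /\ 0 < T,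
   bf c11 c12 c13 c22 c23 c33 x1 x2 x3 x1 x2 x3 = 1 /\ bf c11 c12 c13 c22 c23 c33 x1 x2 x3 y1 y2 y3 = 1 /\ bf c11 c12 c13 c22 c23 c33 x1 x2 x3 z1 z2 z3 = 2 /\ bf c11 c12 c13 c22 c23 c33 y1 y2 y3 y1 y2 y3 = 0 /\ bf c11 c12 c13 c22 c23 c33 y1 y2 y3 z1 z2 z3 = 1 /\ bf c11 c12 c13 c22 c23 c33 z1 z2 z3 z1 z2 z3 = 0 /\ bf c11 c12 c13 c22 c23 c33 y1 y2 y3 w1 w2 w3 = 2 * T /\ bf c11 c12 c13 c22 c23 c33 z1 z2 z3 w1 w2 w3 = T /\ bf c11 c12 c13 c22 c23 c33 w1 w2 w3 w1 w2 w3 = T ^ 2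
 & forall a1 a2 a3, c11 * a1 + c12 * a2 + c13 * a3 = 0 -> c12 * a1 + c22 * a2 + c23 * a3 = 0 -> c13 * a1 + c23 * a2 + c33 * a3 = 0 -> a1 = 0 /\ a2 = 0 /\ a3 = 0].

Lemma core (R : realFieldType) (t w p q s u x y z x' y' z' T : R) :
  0 <= t -> 0 <= w -> 0 <= p -> 0 <= q -> 0 <= s -> 0 <= u ->
  0 <= x -> 0 <= y -> 0 <= z -> 0 <= x' -> 0 <= y' -> 0 <= z' -> 0 < T ->
  t * (p * y + q * z) = 1 -> w * (p * x + s * z) = 2 -> t * w * p = 1 ->
  2 * p * x * y + 2 * q * x * z + 2 * s * y * z + u * z^2 = 1 ->
  t * (p * y' + q * z') = 2 * T -> w * (p * x' + s * z') = T ->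
  2 * p * x' * y' + 2 * q * x' * z' + 2 * s * y' * z' + u * z'^2 = T^2 -> False.
Proof.
move=> t0 s0 p0 q0 ss0 u0 x0 y0 z0 x0' y0' z0' T0 H12 H13 H23 H11 H42 H43 H44.
have h1 : t * w * (z^2 * (2 * q * s - p * u)) = 3.
  have e : t * w * p * (2 * p * x * y + 2 * q * x * z + 2 * s * y * z + u * z^2) =
    2 * (w * (p * x+s * z)) * (t * (p * y+q * z)) - t * w * (z^2 * (2 * q * s - p * u)) by ring.
  rewrite H11 H23 H13 H12 in e; lra.
have h2 : t * w * (z'^2 * (2 * q * s - p * u)) = 3  *  T^2.
  have e : t * w * p * (2 * p * x' * y' + 2 * q * x' * z' + 2 * s * y' * z' + u * z'^2) =
    2 * (w * (p * x'+s * z')) * (t * (p * y'+q * z')) - t * w * (z'^2 * (2 * q * s - p * u)) by ring.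
  rewrite H44 H23 H43 H42 in e; lra.
have h3 : z' = T  *  z.
  have e : (t * w * (2 * q * s - p * u))  *  ((z' - T * z)  *  (z' + T * z)) = 0.
    have -> : (t * w * (2 * q * s - p * u))  *  ((z' - T * z)  *  (z' + T * z)) =
      t * w * (z'^2 * (2 * q * s - p * u)) - T^2  *  (t * w * (z^2 * (2 * q * s - p * u))) by ring.
    by rewrite h1 h2; ring.
  have K0 : t * w * (2 * q * s - p * u) != 0.
    apply/eqP => K; move: h1; rewrite (_ : t * w * (z^2 * (2 * q * s - p * u)) = (t * w * (2 * q * s - p * u)) * z^2); last by ring.
    by rewrite K mul0r => /eqP; rewrite eq_sym pnatr_eq0.
  move/eqP: e; rewrite mulf_eq0 (negbTE K0) /= mulf_eq0 => /orP[/eqP e|/eqP e]; first lra.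
  have : 0 <= T * z by rewrite mulr_ge0 // ltW.
  lra.
have b1 : t * q * z <= 1.
  have : 0 <= t * (p * y) by rewrite !mulr_ge0.
  lra.
have b2 : w * s * z <= 1.
  have : w * s * z' <= T.
    have : 0 <= w * (p * x') by rewrite !mulr_ge0.
    lra.
  rewrite h3 => hh.
  have : (w * s * z - 1) * T <= 0 by lra.
  rewrite pmulr_lle0 //; lra.
have : 0 <= t * w * (z ^ 2 * (p * u)) by rewrite !mulr_ge0.
have : t * w * (z ^ 2 * (2 * q * s)) = 2 * (t * q * z) * (w * s * z) by ring.
have : 0 <= t * q * z by rewrite !mulr_ge0.
have : 0 <= w * s * z by rewrite !mulr_ge0.
nra.
Qed.

Lemma zero3l (R : realFieldType) (a b c : R) : 0 < a -> 0 < b -> a * b * c = 0 -> c = 0.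
Proof. by move=> ha hb /eqP; rewrite !mulf_eq0 (gt_eqF ha) (gt_eqF hb) /= => /eqP. Qed.
Lemma zero3m (R : realFieldType) (a b c : R) : 0 < a -> 0 < c -> a * b * c = 0 -> b = 0.
Proof. by move=> ha hc /eqP; rewrite !mulf_eq0 (gt_eqF ha) (gt_eqF hc) /= orbF => /eqP. Qed.
Lemma zero3f (R : realFieldType) (a b c : R) : 0 < b -> 0 < c -> a * b * c = 0 -> a = 0.
Proof. by move=> hb hc /eqP; rewrite !mulf_eq0 (gt_eqF hb) (gt_eqF hc) /= !orbF => /eqP. Qed.
Lemma pos_of3 (R : realFieldType) (a b c : R) : 0 <= a -> 0 <= b -> 0 <= c -> 0 < a * b * c ->
  [/\ 0 < a, 0 < b & 0 < c].
Proof.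
move=> ha hb hc H; split; rewrite lt0r ?ha ?hb ?hc andbT; apply/eqP => h; move: H;
  by rewrite h ?(mul0r, mulr0) ltxx.
Qed.

Lemma case12 (R : realFieldType) (c11 c12 c13 c22 c23 c33 x1 x2 x3 y1 y2 y3 z1 z2 z3 w1 w2 w3 T : R) :
  Sys c11 c12 c13 c22 c23 c33 x1 x2 x3 y1 y2 y3 z1 z2 z3 w1 w2 w3 T -> 0 < y1 * z2 * c12 -> False.
Proof.
rewrite /Sys => -[NN EQ INJ] H.
case: NN => [c11g [c12g [c13g [c22g [c23g [c33g [x1g [x2g [x3g [y1g [y2g [y3g [z1g [z2g [z3g [w1g [w2g [w3g T0]]]]]]]]]]]]]]]]]].
case: EQ => E11 [E12 [E13 [E22 [E23 [E33 [E24 [E34 E44]]]]]]].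
rewrite /bf in E11 E12 E13 E22 E23 E33 E24 E34 E44.
have pos : forall a b c : R, 0 <= a -> 0 <= b -> 0 <= c -> 0 <= a * b * c by move=> a b c *; rewrite !mulr_ge0.
have nyy_11 := pos _ _ _ y1g y1g c11g.
have nyy_12 := pos _ _ _ y1g y2g c12g.
have nyy_13 := pos _ _ _ y1g y3g c13g.
have nyy_21 := pos _ _ _ y2g y1g c12g.
have nyy_22 := pos _ _ _ y2g y2g c22g.
have nyy_23 := pos _ _ _ y2g y3g c23g.
have nyy_31 := pos _ _ _ y3g y1g c13g.
have nyy_32 := pos _ _ _ y3g y2g c23g.
have nyy_33 := pos _ _ _ y3g y3g c33g.
have nzz_11 := pos _ _ _ z1g z1g c11g.
have nzz_12 := pos _ _ _ z1g z2g c12g.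
have nzz_13 := pos _ _ _ z1g z3g c13g.
have nzz_21 := pos _ _ _ z2g z1g c12g.
have nzz_22 := pos _ _ _ z2g z2g c22g.
have nzz_23 := pos _ _ _ z2g z3g c23g.
have nzz_31 := pos _ _ _ z3g z1g c13g.
have nzz_32 := pos _ _ _ z3g z2g c23g.
have nzz_33 := pos _ _ _ z3g z3g c33g.
have [y1p z2p c12p] := pos_of3 y1g z2g c12g H.
have c110 : c11 = 0 by apply: (zero3l y1p y1p); lra.
have y20 : y2 = 0 by apply: (zero3m y1p c12p); lra.
have c220 : c22 = 0 by apply: (zero3l z2p z2p); lra.
have z10 : z1 = 0 by apply: (zero3f z2p c12p); lra.
have y30 : y3 = 0.
  have [y3p|y3n] := ltrP 0 y3; last lra.
  have c130 : c13 = 0 by apply: (zero3l y1p y3p); lra.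
  have c330 : c33 = 0 by apply: (zero3l y3p y3p); lra.
  have [_ [_ h]] := INJ c23 0 (- c12) ltac:(rewrite c110 c130; lra) ltac:(lra) ltac:(rewrite c130 c330; lra).
  lra.
have z30 : z3 = 0.
  have [z3p|z3n] := ltrP 0 z3; last lra.
  have c230 : c23 = 0 by apply: (zero3l z2p z3p); lra.
  have c330 : c33 = 0 by apply: (zero3l z3p z3p); lra.
  have [_ [_ h]] := INJ 0 c13 (- c12) ltac:(lra) ltac:(rewrite c220 c230; lra) ltac:(rewrite c230 c330; lra).
  lra.
subst.
apply: (core y1g z2g c12g c13g c23g c33g x1g x2g x3g w1g w2g w3g T0); lra.
Qed.

Lemma diag11 (R : realFieldType) (c11 c12 c13 c22 c23 c33 x1 x2 x3 y1 y2 y3 z1 z2 z3 w1 w2 w3 T : R) :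
  Sys c11 c12 c13 c22 c23 c33 x1 x2 x3 y1 y2 y3 z1 z2 z3 w1 w2 w3 T -> 0 < y1 * z1 * c11 -> False.
Proof.
rewrite /Sys => -[NN EQ INJ] H.
case: NN => [c11g [c12g [c13g [c22g [c23g [c33g [x1g [x2g [x3g [y1g [y2g [y3g [z1g [z2g [z3g [w1g [w2g [w3g T0]]]]]]]]]]]]]]]]]].
case: EQ => E11 [E12 [E13 [E22 [E23 [E33 [E24 [E34 E44]]]]]]].
rewrite /bf in E11 E12 E13 E22 E23 E33 E24 E34 E44.
have pos : forall a b c : R, 0 <= a -> 0 <= b -> 0 <= c -> 0 <= a * b * c by move=> a b c *; rewrite !mulr_ge0.
have nyy_11 := pos _ _ _ y1g y1g c11g.
have nyy_12 := pos _ _ _ y1g y2g c12g.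
have nyy_13 := pos _ _ _ y1g y3g c13g.
have nyy_21 := pos _ _ _ y2g y1g c12g.
have nyy_22 := pos _ _ _ y2g y2g c22g.
have nyy_23 := pos _ _ _ y2g y3g c23g.
have nyy_31 := pos _ _ _ y3g y1g c13g.
have nyy_32 := pos _ _ _ y3g y2g c23g.
have nyy_33 := pos _ _ _ y3g y3g c33g.
have [y1p z1p c11p] := pos_of3 y1g z1g c11g H.
have : 0 < y1 * y1 * c11 by rewrite !mulr_gt0.
lra.
Qed.

Lemma Sys_perm123 (R : realFieldType) (c11 c12 c13 c22 c23 c33 x1 x2 x3 y1 y2 y3 z1 z2 z3 w1 w2 w3 T : R) :
  Sys c11 c12 c13 c22 c23 c33 x1 x2 x3 y1 y2 y3 z1 z2 z3 w1 w2 w3 T -> Sys c11 c12 c13 c22 c23 c33 x1 x2 x3 y1 y2 y3 z1 z2 z3 w1 w2 w3 T.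
Proof.
rewrite /Sys => -[NN EQ INJ]; split.
- by intuition.
- case: EQ => E1 [E2 [E3 [E4 [E5 [E6 [E7 [E8 E9]]]]]]].
  rewrite /bf in E1 E2 E3 E4 E5 E6 E7 E8 E9 *.
  split; [by rewrite -E1; ring|split; [by rewrite -E2; ring|split; [by rewrite -E3; ring|split; [by rewrite -E4; ring|split; [by rewrite -E5; ring|split; [by rewrite -E6; ring|split; [by rewrite -E7; ring|split; [by rewrite -E8; ring| by rewrite -E9; ring]]]]]]]].
- move=> b1 b2 b3 h1 h2 h3.
  have [? [? ?]] := INJ b1 b2 b3 ltac:(lra) ltac:(lra) ltac:(lra).
  by repeat split; lra.
Qed.

Lemma Sys_perm132 (R : realFieldType) (c11 c12 c13 c22 c23 c33 x1 x2 x3 y1 y2 y3 z1 z2 z3 w1 w2 w3 T : R) :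
  Sys c11 c12 c13 c22 c23 c33 x1 x2 x3 y1 y2 y3 z1 z2 z3 w1 w2 w3 T -> Sys c11 c13 c12 c33 c23 c22 x1 x3 x2 y1 y3 y2 z1 z3 z2 w1 w3 w2 T.
Proof.
rewrite /Sys => -[NN EQ INJ]; split.
- by intuition.
- case: EQ => E1 [E2 [E3 [E4 [E5 [E6 [E7 [E8 E9]]]]]]].
  rewrite /bf in E1 E2 E3 E4 E5 E6 E7 E8 E9 *.
  split; [by rewrite -E1; ring|split; [by rewrite -E2; ring|split; [by rewrite -E3; ring|split; [by rewrite -E4; ring|split; [by rewrite -E5; ring|split; [by rewrite -E6; ring|split; [by rewrite -E7; ring|split; [by rewrite -E8; ring| by rewrite -E9; ring]]]]]]]].
- move=> b1 b2 b3 h1 h2 h3.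
  have [? [? ?]] := INJ b1 b3 b2 ltac:(lra) ltac:(lra) ltac:(lra).
  by repeat split; lra.
Qed.

Lemma Sys_perm213 (R : realFieldType) (c11 c12 c13 c22 c23 c33 x1 x2 x3 y1 y2 y3 z1 z2 z3 w1 w2 w3 T : R) :
  Sys c11 c12 c13 c22 c23 c33 x1 x2 x3 y1 y2 y3 z1 z2 z3 w1 w2 w3 T -> Sys c22 c12 c23 c11 c13 c33 x2 x1 x3 y2 y1 y3 z2 z1 z3 w2 w1 w3 T.
Proof.
rewrite /Sys => -[NN EQ INJ]; split.
- by intuition.
- case: EQ => E1 [E2 [E3 [E4 [E5 [E6 [E7 [E8 E9]]]]]]].
  rewrite /bf in E1 E2 E3 E4 E5 E6 E7 E8 E9 *.
  split; [by rewrite -E1; ring|split; [by rewrite -E2; ring|split; [by rewrite -E3; ring|split; [by rewrite -E4; ring|split; [by rewrite -E5; ring|split; [by rewrite -E6; ring|split; [by rewrite -E7; ring|split; [by rewrite -E8; ring| by rewrite -E9; ring]]]]]]]].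
- move=> b1 b2 b3 h1 h2 h3.
  have [? [? ?]] := INJ b2 b1 b3 ltac:(lra) ltac:(lra) ltac:(lra).
  by repeat split; lra.
Qed.

Lemma Sys_perm231 (R : realFieldType) (c11 c12 c13 c22 c23 c33 x1 x2 x3 y1 y2 y3 z1 z2 z3 w1 w2 w3 T : R) :
  Sys c11 c12 c13 c22 c23 c33 x1 x2 x3 y1 y2 y3 z1 z2 z3 w1 w2 w3 T -> Sys c22 c23 c12 c33 c13 c11 x2 x3 x1 y2 y3 y1 z2 z3 z1 w2 w3 w1 T.
Proof.
rewrite /Sys => -[NN EQ INJ]; split.
- by intuition.
- case: EQ => E1 [E2 [E3 [E4 [E5 [E6 [E7 [E8 E9]]]]]]].
  rewrite /bf in E1 E2 E3 E4 E5 E6 E7 E8 E9 *.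
  split; [by rewrite -E1; ring|split; [by rewrite -E2; ring|split; [by rewrite -E3; ring|split; [by rewrite -E4; ring|split; [by rewrite -E5; ring|split; [by rewrite -E6; ring|split; [by rewrite -E7; ring|split; [by rewrite -E8; ring| by rewrite -E9; ring]]]]]]]].
- move=> b1 b2 b3 h1 h2 h3.
  have [? [? ?]] := INJ b3 b1 b2 ltac:(lra) ltac:(lra) ltac:(lra).
  by repeat split; lra.
Qed.

Lemma Sys_perm312 (R : realFieldType) (c11 c12 c13 c22 c23 c33 x1 x2 x3 y1 y2 y3 z1 z2 z3 w1 w2 w3 T : R) :
  Sys c11 c12 c13 c22 c23 c33 x1 x2 x3 y1 y2 y3 z1 z2 z3 w1 w2 w3 T -> Sys c33 c13 c23 c11 c12 c22 x3 x1 x2 y3 y1 y2 z3 z1 z2 w3 w1 w2 T.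
Proof.
rewrite /Sys => -[NN EQ INJ]; split.
- by intuition.
- case: EQ => E1 [E2 [E3 [E4 [E5 [E6 [E7 [E8 E9]]]]]]].
  rewrite /bf in E1 E2 E3 E4 E5 E6 E7 E8 E9 *.
  split; [by rewrite -E1; ring|split; [by rewrite -E2; ring|split; [by rewrite -E3; ring|split; [by rewrite -E4; ring|split; [by rewrite -E5; ring|split; [by rewrite -E6; ring|split; [by rewrite -E7; ring|split; [by rewrite -E8; ring| by rewrite -E9; ring]]]]]]]].
- move=> b1 b2 b3 h1 h2 h3.
  have [? [? ?]] := INJ b2 b3 b1 ltac:(lra) ltac:(lra) ltac:(lra).
  by repeat split; lra.
Qed.

Lemma Sys_perm321 (R : realFieldType) (c11 c12 c13 c22 c23 c33 x1 x2 x3 y1 y2 y3 z1 z2 z3 w1 w2 w3 T : R) :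
  Sys c11 c12 c13 c22 c23 c33 x1 x2 x3 y1 y2 y3 z1 z2 z3 w1 w2 w3 T -> Sys c33 c23 c13 c22 c12 c11 x3 x2 x1 y3 y2 y1 z3 z2 z1 w3 w2 w1 T.
Proof.
rewrite /Sys => -[NN EQ INJ]; split.
- by intuition.
- case: EQ => E1 [E2 [E3 [E4 [E5 [E6 [E7 [E8 E9]]]]]]].
  rewrite /bf in E1 E2 E3 E4 E5 E6 E7 E8 E9 *.
  split; [by rewrite -E1; ring|split; [by rewrite -E2; ring|split; [by rewrite -E3; ring|split; [by rewrite -E4; ring|split; [by rewrite -E5; ring|split; [by rewrite -E6; ring|split; [by rewrite -E7; ring|split; [by rewrite -E8; ring| by rewrite -E9; ring]]]]]]]].
- move=> b1 b2 b3 h1 h2 h3.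
  have [? [? ?]] := INJ b3 b2 b1 ltac:(lra) ltac:(lra) ltac:(lra).
  by repeat split; lra.
Qed.

Lemma allcases (R : realFieldType) (c11 c12 c13 c22 c23 c33 x1 x2 x3 y1 y2 y3 z1 z2 z3 w1 w2 w3 T : R) :
  Sys c11 c12 c13 c22 c23 c33 x1 x2 x3 y1 y2 y3 z1 z2 z3 w1 w2 w3 T -> False.
Proof.
move=> HS.
have [p11|n11] := ltrP 0 (y1 * z1 * c11).
  exact: (diag11 (Sys_perm123 HS) p11).
have [p12|n12] := ltrP 0 (y1 * z2 * c12).
  exact: (case12 (Sys_perm123 HS) p12).
have [p13|n13] := ltrP 0 (y1 * z3 * c13).
  exact: (case12 (Sys_perm132 HS) p13).
have [p21|n21] := ltrP 0 (y2 * z1 * c12).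
  exact: (case12 (Sys_perm213 HS) p21).
have [p22|n22] := ltrP 0 (y2 * z2 * c22).
  exact: (diag11 (Sys_perm213 HS) p22).
have [p23|n23] := ltrP 0 (y2 * z3 * c23).
  exact: (case12 (Sys_perm231 HS) p23).
have [p31|n31] := ltrP 0 (y3 * z1 * c13).
  exact: (case12 (Sys_perm312 HS) p31).
have [p32|n32] := ltrP 0 (y3 * z2 * c23).
  exact: (case12 (Sys_perm321 HS) p32).
have [p33|n33] := ltrP 0 (y3 * z3 * c33).
  exact: (diag11 (Sys_perm312 HS) p33).

case: HS => _ [_ [_ [_ [_ [E23 _]]]]] _.
rewrite /bf in E23; lra.
Qed.

Notation i0 := (@Ordinal 3 0 isT).
Notation i1 := (@Ordinal 3 1 isT).
Notation i2 := (@Ordinal 3 2 isT).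

Lemma sum3 (R : nmodType) (F : 'I_3 -> R) : \sum_(i < 3) F i = F i0 + F i1 + F i2.
Proof.
rewrite !big_ord_recl big_ord0 addr0 addrA; congr (_ + _ + _); congr F; exact: val_inj.
Qed.

Section Concrete.
Variable R : realType.

Definition U1 : 'M[R]_3 :=
  \matrix_(i < 3, j < 3) (nth [::] [:: [:: 0; 2; 1]; [:: 1; 1; 0]; [:: 1; 0; 1]] i)`_j.
Definition u2 : 'rV[R]_3 := \row_(j < 3) [:: 0; 1; 2]`_j.
Definition W1 : 'M[R]_3 :=
  \matrix_(i < 3, j < 3) (nth [::] [:: [:: 1; 0; 1]; [:: 0; 0; 1]; [:: 0; 1; 0]] i)`_j.
Definition w2 : 'rV[R]_3 := \row_(j < 3) [:: 1; 1; 0]`_j.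
Definition A1adj : 'M[R]_3 :=
  \matrix_(i < 3, j < 3) (nth [::] [:: [:: -1; 2; 1]; [:: 2; -4; 1]; [:: 1; 1; -1]] i)`_j.

Lemma A1_UW : A1 R = U1 *m W1^T.
Proof.
apply/matrixP => i j; rewrite !mxE sum3 !mxE.
by case: i => [[|[|[|i]]] Hi] //; case: j => [[|[|[|j]]] Hj] //=; ring.
Qed.

Lemma a_Uw : avec R = U1 *m w2^T.
Proof.
apply/matrixP => i j; rewrite !mxE sum3 !mxE.
by case: i => [[|[|[|i]]] Hi] //; case: j => [[|j] Hj] //=; ring.
Qed.

Lemma aT_uW : (avec R)^T = u2 *m W1^T.
Proof.
apply/matrixP => i j; rewrite !mxE sum3 !mxE.
by case: i => [[|i] Hi] //; case: j => [[|[|[|j]]] Hj] //=; ring.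
Qed.

Lemma one_uw : 1%:M = u2 *m w2^T.
Proof.
apply/matrixP => i j; rewrite !mxE sum3 !mxE.
by case: i => [[|i] Hi] //; case: j => [[|j] Hj] //=; ring.
Qed.

Lemma A1_adj : A1 R *m A1adj = 3%:M.
Proof.
apply/matrixP => i j; rewrite !mxE sum3 !mxE.
by case: i => [[|[|[|i]]] Hi] //; case: j => [[|[|[|j]]] Hj] //=; ring.
Qed.

Lemma A1_unit : A1 R \in unitmx.
Proof.
have : A1 R *m ((3 : R)^-1 *: A1adj) = 1%:M.
  rewrite -scalemxAr A1_adj scale_scalar_mx mulVf //.
  by rewrite pnatr_eq0.
by case/mulmx1_unit.
Qed.

Lemma A1_sym : (A1 R)^T = A1 R.
Proof.
apply/matrixP => i j; rewrite !mxE.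
by case: i => [[|[|[|i]]] Hi] //; case: j => [[|[|[|j]]] Hj].
Qed.

Lemma A1_nn : nonneg_mx (A1 R).
Proof.
move=> i j; rewrite !mxE.
by case: i => [[|[|[|i]]] Hi] //; case: j => [[|[|[|j]]] Hj] //=; rewrite ?ler01 ?lexx ?ler0n.
Qed.

Lemma a_nn : nonneg_mx (avec R).
Proof.
move=> i j; rewrite !mxE.
by case: i => [[|[|[|i]]] Hi] //=; rewrite ?ler01 ?lexx ?ler0n.
Qed.

End Concrete.

Section Gen.
Variable R : realType.

Lemma nn_mul m n p (A : 'M[R]_(m, n)) (B : 'M[R]_(n, p)) :
  nonneg_mx A -> nonneg_mx B -> nonneg_mx (A *m B).
Proof. by move=> hA hB i j; rewrite mxE sumr_ge0 // => l _; rewrite mulr_ge0. Qed.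

Lemma nn_block m1 m2 n1 n2 (A : 'M[R]_(m1, n1)) (B : 'M[R]_(m1, n2))
  (C : 'M[R]_(m2, n1)) (D : 'M[R]_(m2, n2)) :
  nonneg_mx A -> nonneg_mx B -> nonneg_mx C -> nonneg_mx D -> nonneg_mx (block_mx A B C D).
Proof.
move=> hA hB hC hD i j; rewrite /block_mx mxE; case: split => a; rewrite mxE; case: split => b.
all: by [].
Qed.

Lemma nn_one n : nonneg_mx (1%:M : 'M[R]_n).
Proof. by move=> i j; rewrite mxE ler0n. Qed.

Lemma nn_zero m n : nonneg_mx (0 : 'M[R]_(m, n)).
Proof. by move=> i j; rewrite mxE. Qed.

Lemma nn_tr m n (A : 'M[R]_(m, n)) : nonneg_mx A -> nonneg_mx A^T.
Proof. by move=> hA i j; rewrite mxE. Qed.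

Definition Emx k (v : 'cV[R]_k) : 'M[R]_(3 + k, 3 + 1) := block_mx 1%:M 0 0 v.
Definition M4 : 'M[R]_(3 + 1) := block_mx (A1 R) (avec R) (avec R)^T 1%:M.
Definition U4 : 'M[R]_(3 + 1, 3) := col_mx (U1 R) (u2 R).
Definition W4 : 'M[R]_(3 + 1, 3) := col_mx (W1 R) (w2 R).

Lemma Av_E k (v : 'cV[R]_k) : Av v = Emx v *m M4 *m (Emx v)^T.
Proof.
rewrite /Emx /M4 tr_block_mx !mulmx_block trmx1 !trmx0.
rewrite !(mul1mx, mul0mx, mulmx1, mulmx0, addr0, add0r, mulmxA).
by rewrite /Av.
Qed.

Lemma M4_UW : M4 = U4 *m W4^T.
Proof.
by rewrite /U4 /W4 tr_col_mx mul_col_row -A1_UW -a_Uw -aT_uW -one_uw.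
Qed.

Lemma M4_nn : nonneg_mx M4.
Proof. by apply: nn_block; [exact: A1_nn|exact: a_nn|apply: nn_tr; exact: a_nn|exact: nn_one]. Qed.

Lemma M4_sym : M4^T = M4.
Proof. by rewrite /M4 tr_block_mx A1_sym trmxK trmx1. Qed.

Lemma U4_nn : nonneg_mx U4.
Proof.
move=> i j; rewrite /U4 mxE; case: split => a; rewrite !mxE.
  by case: a => [[|[|[|a]]] Ha] //; case: j => [[|[|[|j]]] Hj] //=; rewrite ?ler01 ?lexx ?ler0n.
by case: j => [[|[|[|j]]] Hj] //=; rewrite ?ler01 ?lexx ?ler0n.
Qed.

Lemma W4_nn : nonneg_mx W4.
Proof.
move=> i j; rewrite /W4 mxE; case: split => a; rewrite !mxE.
  by case: a => [[|[|[|a]]] Ha] //; case: j => [[|[|[|j]]] Hj] //=; rewrite ?ler01 ?lexx ?ler0n.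
by case: j => [[|[|[|j]]] Hj] //=; rewrite ?ler01 ?lexx ?ler0n.
Qed.

Lemma E_nn k (v : 'cV[R]_k) : nonneg_mx v -> nonneg_mx (Emx v).
Proof. by move=> hv; apply: nn_block => //; [exact: nn_one|exact: nn_zero|exact: nn_zero]. Qed.

Lemma Av_nnfact k (v : 'cV[R]_k) :
  Av v = (Emx v *m U4) *m (Emx v *m W4)^T.
Proof. by rewrite Av_E M4_UW trmx_mul !mulmxA. Qed.

Lemma A1_sub k (v : 'cV[R]_k) :
  A1 R = row_mx 1%:M 0 *m Av v *m (row_mx 1%:M 0)^T.
Proof.
rewrite /Av mul_row_block tr_row_mx mul_row_col trmx1 trmx0.
by rewrite !(mul1mx, mul0mx, mulmx1, mulmx0, addr0, add0r).
Qed.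

Lemma rank_Av k (v : 'cV[R]_k) : \rank (Av v) = 3%N.
Proof.
apply/eqP; rewrite eqn_leq; apply/andP; split.
  by rewrite Av_nnfact (leq_trans (mxrankM_maxl _ _)) // rank_leq_col.
rewrite -{1}(mxrank_unit (A1_unit R)) (A1_sub v).
by rewrite (leq_trans (mxrankM_maxl _ _)) // mxrankM_maxr.
Qed.

End Gen.

Section Main.
Variable R : realType.

Lemma entry_BCB n (B : 'M[R]_(n, 3)) (C : 'M[R]_3) r s : C^T = C ->
  (B *m C *m B^T) r s = bf (C i0 i0) (C i0 i1) (C i0 i2) (C i1 i1) (C i1 i2) (C i2 i2)
     (B r i0) (B r i1) (B r i2) (B s i0) (B s i1) (B s i2).
Proof.
move=> sC; have sym i j : C j i = C i j by rewrite -[in LHS]sC mxE.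
rewrite mxE sum3 !mxE !sum3 ?mxE (sym i0 i1) (sym i0 i2) (sym i1 i2) /bf; ring.
Qed.

Lemma no_snt3 k (v : 'cV[R]_k) : nonneg_mx v -> v^T *m v = 1%:M -> snt_fact (Av v) 3 -> False.
Proof.
move=> nv Hv [B [C [nB nC sC HA]]].
have [j0 hj] : exists j, 0 < v j 0.
  suff /existsP [j hj] : [exists j, 0 < v j 0] by exists j.
  have [//|/existsPn H] := boolP [exists j, 0 < v j 0]; exfalso.
  move: (congr1 (fun M : 'M[R]_1 => M 0 0) Hv); rewrite !mxE big1 ?eqxx => [/eqP|j _].
    by rewrite eq_sym oner_eq0.
  have := H j; rewrite mxE -leNgt => hle.
  have : v j 0 = 0 by apply: le_anti; rewrite hle nv.
  by move->; rewrite mulr0.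
set r1 := lshift k i0; set r2 := lshift k i1; set r3 := lshift k i2; set r4 := rshift 3 j0.
have E (r s : 'I_(3 + k)) := (entry_BCB B r s sC).
rewrite -HA in E.
have Cunit : C \in unitmx.
  pose B1 : 'M[R]_3 := \matrix_(i, j) B (lshift k i) j.
  have : A1 R = B1 *m C *m B1^T.
    apply/matrixP => i j.
    rewrite -[LHS](block_mxEul (A1 R) (avec R *m v^T) (v *m (avec R)^T) (v *m v^T)) -/(Av v) HA.
    rewrite !mxE; apply: eq_bigr => b _; rewrite !mxE; congr (_ * _).
    by apply: eq_bigr => a _; rewrite !mxE.
  move=> h; have := A1_unit R; rewrite h !unitmx_mul.
  by case/andP => /andP [].
have INJ : forall a1 a2 a3 : R,
    C i0 i0 * a1 + C i0 i1 * a2 + C i0 i2 * a3 = 0 ->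
    C i0 i1 * a1 + C i1 i1 * a2 + C i1 i2 * a3 = 0 ->
    C i0 i2 * a1 + C i1 i2 * a2 + C i2 i2 * a3 = 0 -> a1 = 0 /\ a2 = 0 /\ a3 = 0.
  move=> a1 a2 a3 h1 h2 h3.
  pose x : 'cV[R]_3 := \col_(i < 3) [:: a1; a2; a3]`_i.
  have sym i j : C j i = C i j by rewrite -[in LHS]sC mxE.
  have Cx : C *m x = 0.
    apply/matrixP => i j; rewrite !mxE sum3 !mxE /=.
    case: i => [[|[|[|i]]] Hi] //=.
    - have -> : Ordinal Hi = i0 by exact: val_inj.
      by rewrite -h1.
    - have -> : Ordinal Hi = i1 by exact: val_inj.
      by rewrite (sym i0 i1) -h2.
    - have -> : Ordinal Hi = i2 by exact: val_inj.
      by rewrite (sym i0 i2) (sym i1 i2) -h3.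
  have x0 : x = 0 by rewrite -(mulKmx Cunit x) Cx mulmx0.
  have := congr1 (fun M : 'cV[R]_3 => M i0 0) x0; have := congr1 (fun M : 'cV[R]_3 => M i1 0) x0;
  have := congr1 (fun M : 'cV[R]_3 => M i2 0) x0; rewrite !mxE /= => -> -> ->; by [].
have hA (a b : 'I_3) : Av v (lshift k a) (lshift k b) = A1 R a b by rewrite /Av block_mxEul.
have ha (a : 'I_3) : Av v (lshift k a) r4 = avec R a 0 * v j0 0.
  by rewrite /Av block_mxEur mxE big_ord1 !mxE.
have hv : Av v r4 r4 = v j0 0 ^+ 2 by rewrite /Av block_mxEdr mxE big_ord1 !mxE expr2.
apply: (@allcases R (C i0 i0) (C i0 i1) (C i0 i2) (C i1 i1) (C i1 i2) (C i2 i2)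
  (B r1 i0) (B r1 i1) (B r1 i2) (B r2 i0) (B r2 i1) (B r2 i2)
  (B r3 i0) (B r3 i1) (B r3 i2) (B r4 i0) (B r4 i1) (B r4 i2) (v j0 0)).
split.
- by do 18 (split; first by apply: nB || apply: nC).
- rewrite -!E !hA !ha hv !mxE /=.
  do 8 (split; first by rewrite ?mul1r).
  by rewrite exprnP.
- move=> a1 a2 a3 h1 h2 h3; exact: (INJ a1 a2 a3 h1 h2 h3).
Qed.

End Main.


Theorem mainTheorem8 (R : realType) (k : nat) (v : 'cV[R]_k) :
  (1 <= k)%N -> nonneg_mx v -> v^T *m v = 1%:M ->
  [/\ \rank (Av v) = 3%N, rk_plus_is (Av v) 3 & st_plus_is (Av v) 4].
Proof.
move=> _ nv Hv; split.
- exact: rank_Av.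
- split.
  + exists (Emx v *m U4 R), (Emx v *m W4 R); split.
    * by apply: nn_mul; [exact: E_nn|exact: U4_nn].
    * by apply: nn_mul; [exact: E_nn|exact: W4_nn].
    * exact: Av_nnfact.
  + move=> k' [U [V [_ _ HA]]]; rewrite -(rank_Av v) HA.
    exact: (leq_trans (mxrankM_maxl _ _) (rank_leq_col _)).
- split.
  + exists (Emx v), (M4 R); split; [exact: E_nn | exact: M4_nn | exact: M4_sym | exact: Av_E].
  + move=> k' H; have := H; case=> B [C [_ _ _ HA]].
    have k3 : (3 <= k')%N.
      rewrite -(rank_Av v) HA.
      exact: (leq_trans (mxrankM_maxl _ _) (leq_trans (mxrankM_maxl _ _) (rank_leq_col _))).
    rewrite ltn_neqAle k3 andbT; apply/negP => /eqP h; subst k'.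
    exact: (no_snt3 nv Hv H).
Qed.
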